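(* Let $W=\langle w_1,\dots,w_n\rangle$ be a weave. (i) If $|V(W)|\ge 3$ and $W$ is prime, then $W$ is isomorphic to $T_m$ or $U_m$ for some odd $m$. (ii) If $|V(W)|\ge 2$, $v\notin V(W)$ is a vertex such that $v\to w_i$ for all odd $i$ and $w_i\to v$ for all even $i$, and the tournament $W+v$ on $V(W)\cup\{v\}$ is prime, then $W+v$ is isomorphic to $T_m$, $U_m$, or $W_m$ for some odd $m$.
   Context: A tournament is a finite, non-null, loopless directed graph in which for any two distinct vertices $u,v$ there is exactly one edge with both ends in $\{u,v\}$; write $u\to v$ for the edge from $u$ to $v$, and $X\Rightarrow Y$ if $x\to y$ for all $x\in X,y\in Y$. A homogeneous set of $G$ is a set $X\subseteq V(G)$ such that each vertex outside $X$ either has edges to all of $X$ or edges from all of $X$; $G$ is prime if every homogeneous set $X$ has $|X|\le 1$ or $X=V(G)$. A weave $\langle w_1,\dots,w_n\rangle$ is a tournament on $w_1,\dots,w_n$ such that: $w_i\to w_j$ whenever $i<j$ and $i,j$ have opposite parity; either $w_i\to w_j$ for all $i<j$ both odd, or $w_j\to w_i$ for all $i<j$ both odd; and either $w_i\to w_j$ for all $i<j$ both even, or $w_j\to w_i$ for all $i<j$ both even. For $m=2k+1$: $T_m$ is the tournament on $v_1,\dots,v_m$ with $v_i\to v_j$ iff $j\equiv i+1,\dots,i+k\pmod m$; $U_m$ is obtained from $T_m$ by reversing all edges with both ends in $\{v_1,\dots,v_k\}$; $W_m$ is the tournament on $x_1,\dots,x_m$ with $x_i\to x_j$ for $1\le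 i<j\le m-1$ and $\{x_2,x_4,\dots,x_{m-1}\}\Rightarrow x_m\Rightarrow\{x_1,x_3,\dots,x_{m-2}\}$. *)

(* Defs.v *)
From mathcomp Require Import all_boot.
Set Implicit Arguments. Unset Strict Implicit. Unset Printing Implicit Defensive.

(* A tournament on a finite type T given by its edge relation adj (adj u v = "u -> v"):
   non-null, loopless, exactly one edge between two distinct vertices. *)
Definition is_tournament (T : finType) (adj : rel T) : Prop :=
  0 < #|T| /\ (forall x, ~~ adj x x) /\ (forall x y, x != y -> adj x y != adj y x).

Definition homogeneous (T : finType) (adj : rel T) (X : {set T}) : Prop :=
  forall v, v \notin X -> (forall x, x \in X -> adj v x) \/ (forall x, x \in X -> adj x v).

Definition prime_tournament (T : finType) (adj : rel T) : Prop :=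
  forall X : {set T}, homogeneous adj X -> #|X| <= 1 \/ X = [set: T].

Definition tour_iso (T T' : finType) (adj : rel T) (adj' : rel T') : Prop :=
  exists f : T -> T', bijective f /\ forall x y, adj x y = adj' (f x) (f y).

(* w : 'I_n -> T lists the distinct vertices w_1,...,w_n (w_i = w (i-1)) of a subtournament
   of (T, adj), and that subtournament (induced on the image of w) is the weave <w_1,...,w_n>.
   Parities below refer to the 1-based index i = k.+1 of w k. *)
Definition weave_on (T : finType) (adj : rel T) (n : nat) (w : 'I_n -> T) : Prop :=
  injective w /\
  (forall i j : 'I_n, i < j -> odd i.+1 != odd j.+1 -> adj (w i) (w j)) /\
  ((forall i j : 'I_n, i < j -> odd i.+1 -> odd j.+1 -> adj (w i) (w j)) \/
   (forall i j : 'I_n, i < j -> odd i.+1 -> odd j.+1 -> adj (w j) (w i))) /\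
  ((forall i j : 'I_n, i < j -> ~~ odd i.+1 -> ~~ odd j.+1 -> adj (w i) (w j)) \/
   (forall i j : 'I_n, i < j -> ~~ odd i.+1 -> ~~ odd j.+1 -> adj (w j) (w i))).

(* T_m on v_1..v_m, encoded 0-based as 'I_m (v_{k+1} = k): v_i -> v_j iff
   j - i mod m lies in {1,...,(m-1)/2}. *)
Definition Tadj (m : nat) : rel 'I_m :=
  fun i j => let d := (j + m - i) %% m in (1 <= d) && (d <= m./2).

(* U_m: reverse the edges of T_m with both ends in {v_1,...,v_k}, k = (m-1)/2. *)
Definition Uadj (m : nat) : rel 'I_m :=
  fun i j => if (i < m./2) && (j < m./2) then Tadj j i else Tadj i j.

(* W_m on x_1..x_m, encoded 0-based (x_{k+1} = k; x_m = m-1):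
   x_i -> x_j for i<j<=m-1; x_i -> x_m for i even (1-based); x_m -> x_i for i odd (1-based), i < m. *)
Definition Wadj (m : nat) : rel 'I_m :=
  fun i j =>
    if (j == m.-1 :> nat) && (i < m.-1) then odd i        (* 1-based index i.+1 even *)
    else if (i == m.-1 :> nat) && (j < m.-1) then ~~ odd j (* 1-based index j.+1 odd *)
    else i < j.

(* Main.v *)
Require Import Defs.
From mathcomp Require Import all_boot zify.
Set Implicit Arguments. Unset Strict Implicit. Unset Printing Implicit Defensive.


Definition wrel (dO dE : bool) (i j : nat) : bool :=
  (i != j) && (if odd i == odd j then (if odd i then (if dE then i < j else j < i)
                                       else (if dO then i < j else j < i)) else i < j).

Lemma wrel_anti dO dE i j : i != j -> wrel dO dE j i = ~~ wrel dO dE i j.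
Proof. rewrite /wrel; case: dO; case: dE; repeat case: ifP; lia. Qed.

Definition ginv (N a : nat) : nat :=
  if a < N./2 then (N./2 - 1 - a).*2.+1 else (N - 1 - a).*2.

Lemma modn_lt2 x m : x < m + m -> x %% m = if x < m then x else x - m.
Proof.
case: ifP => h1 h2; first by rewrite modn_small.
have -> : x = (x - m) + m by lia.
by rewrite modnDr modn_small; lia.
Qed.

Definition Tn (m a b : nat) : bool :=
  let d := (b + m - a) %% m in (1 <= d) && (d <= m./2).

Lemma ginv_lt N a : odd N -> a < N -> ginv N a < N.
Proof. rewrite /ginv; case: ifP; lia. Qed.

Lemma ginv_inj N a b : odd N -> a < N -> b < N -> ginv N a = ginv N b -> a = b.
Proof. rewrite /ginv; case: ifP; case: ifP; lia. Qed.

Lemma gT N a b : odd N -> a < N -> b < N ->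
  wrel false false (ginv N a) (ginv N b) = Tn N a b.
Proof.
move=> oN aN bN; rewrite /Tn modn_lt2; last by lia.
rewrite /wrel /ginv; repeat case: ifP; lia.
Qed.

Lemma gU N a b : odd N -> a < N -> b < N ->
  wrel false true (ginv N a) (ginv N b) =
  if (a < N./2) && (b < N./2) then Tn N b a else Tn N a b.
Proof.
move=> oN aN bN; rewrite /Tn !modn_lt2; try lia.
rewrite /wrel /ginv; repeat case: ifP; lia.
Qed.


Section G.
Variables (T : finType) (adj : rel T).

Lemma cardT_le N (h : nat -> T) : (forall x, exists2 i, i < N & x = h i) -> #|T| <= N.
Proof.
move=> surj.
pose psi := fun k : 'I_N => h k.
have : #|T| <= #|mem (codom psi)|.
  apply: subset_leq_card; apply/subsetP => x _.
  have [i iN ->] := surj x.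
  have -> : h i = psi (Ordinal iN) by [].
  exact: codom_f.
move=> H; apply: (leq_trans H); apply: (leq_trans (card_size _)).
by rewrite size_codom card_ord.
Qed.

Lemma iso_gen N (h : nat -> T) (gi : nat -> nat) (R : rel 'I_N) :
  (forall x, exists2 i, i < N & x = h i) ->
  (forall i j, i < N -> j < N -> h i = h j -> i = j) ->
  (forall a, a < N -> gi a < N) ->
  (forall a b, a < N -> b < N -> gi a = gi b -> a = b) ->
  (forall a b : 'I_N, adj (h (gi a)) (h (gi b)) = R a b) ->
  tour_iso adj R.
Proof.
move=> surj hinj glt ginj HR.
pose F := fun a : 'I_N => h (gi a).
have Finj : injective F.
  move=> a b /hinj; move/(_ (glt _ (ltn_ord a)) (glt _ (ltn_ord b))).
  move/(ginj _ _ (ltn_ord a) (ltn_ord b)) => e; exact: val_inj.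
have bF : bijective F by apply: inj_card_bij => //; rewrite card_ord; exact: cardT_le surj.
case: bF => Fi FK FiK.
exists Fi; split; first by exists F.
by move=> x y; rewrite -{1}(FiK x) -{1}(FiK y) HR.
Qed.

Lemma np_two (X : {set T}) a b : prime_tournament adj -> homogeneous adj X ->
  a \in X -> b \in X -> a != b -> forall c, c \notin X -> False.
Proof.
move=> pr hX aX bX ab c cX.
case: (pr X hX) => [le1|eT].
  have : 1 < #|X| by apply/card_gt1P; exists a, b.
  by rewrite ltnNge le1.
by move: cX; rewrite eT inE.
Qed.

Lemma np_sink s a b : prime_tournament adj -> (forall x, x != s -> adj x s) ->
  a != s -> b != s -> a != b -> False.
Proof.
move=> pr Hs aS bS ab.
apply: (@np_two [set~ s] a b pr _ _ _ ab s); rewrite ?inE ?eqxx ?aS ?bS //.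
move=> v; rewrite !inE negbK => /eqP ->; right => x; rewrite !inE; exact: Hs.
Qed.

Lemma np_source s a b : prime_tournament adj -> (forall x, x != s -> adj s x) ->
  a != s -> b != s -> a != b -> False.
Proof.
move=> pr Hs aS bS ab.
apply: (@np_two [set~ s] a b pr _ _ _ ab s); rewrite ?inE ?eqxx ?aS ?bS //.
move=> v; rewrite !inE negbK => /eqP ->; left => x; rewrite !inE; exact: Hs.
Qed.

Lemma np_pair a b c : prime_tournament adj -> a != b -> c != a -> c != b ->
  (forall v, v != a -> v != b -> (adj v a && adj v b) || (adj a v && adj b v)) -> False.
Proof.
move=> pr ab ca cb H.
apply: (@np_two [set a; b] a b pr _ _ _ ab c); rewrite ?inE ?eqxx ?orbT //; last first.
  by rewrite negb_or ca cb.
move=> v; rewrite !inE negb_or => /andP[va vb].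
case/orP: (H v va vb) => /andP[h1 h2]; [left|right] => x; rewrite !inE => /orP[]/eqP->//.
Qed.

End G.


Ltac par := repeat match goal with |- context [odd ?x] =>
  let E := fresh "E" in case E: (odd x) end; rewrite /=.
Ltac wl := rewrite /wrel /=; par; lia.

Lemma core (T : finType) (adj : rel T) N (h : nat -> T) dO dE :
  is_tournament adj -> 3 <= N ->
  (forall x, exists2 i, i < N & x = h i) ->
  (forall i j, i < N -> j < N -> adj (h i) (h j) = wrel dO dE i j) ->
  prime_tournament adj ->
  exists m, odd m /\ (tour_iso adj (@Tadj m) \/ tour_iso adj (@Uadj m)).
Proof.
move=> [_ [irr _]] N3 surj Hadj pr.
have hinj : forall i j, i < N -> j < N -> h i = h j -> i = j.
  move=> i j iN jN e; apply/eqP; apply/negPn/negP => ij.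
  have := wrel_anti dO dE ij; rewrite -!Hadj // e.
  by rewrite (negbTE (irr _)).
have hneq : forall i j, i < N -> j < N -> i != j -> h i != h j.
  by move=> i j iN jN; apply: contra => /eqP /hinj -> .
have pre : forall s x, x != h s -> exists2 j, j < N & (x = h j /\ j != s).
  move=> s x; have [j jN ->] := surj x => hs; exists j => //; split=> //.
  by apply: contraNneq hs => ->.
case: dO Hadj => Hadj.
  exfalso; apply: (@np_source _ _ (h 0) (h 1) (h 2) pr); try (apply: hneq; lia).
  move=> x /pre [j jN [-> j0]]; rewrite Hadj; try lia.
  by wl.
case oN: (odd N).
  exists N; split=> //.
  case: dE Hadj => Hadj; [right|left]; apply: (iso_gen surj hinj (gi := ginv N));
   try by move=> *; apply: ginv_lt.
  - by move=> a b aN bN; apply: ginv_inj.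
  - move=> a b; rewrite Hadj ?ginv_lt // gU //.
  - by move=> a b aN bN; apply: ginv_inj.
  - move=> a b; rewrite Hadj ?ginv_lt // gT //.
exfalso; case: dE Hadj => Hadj.
  apply: (@np_sink _ _ (h N.-1) (h 0) (h 1) pr); try (apply: hneq; lia).
  move=> x /pre [j jN [-> j0]]; rewrite Hadj; try lia.
  by wl.
apply: (@np_pair _ _ (h 0) (h N.-1) (h 1) pr); try (apply: hneq; lia).
move=> x /pre [j jN [-> j0]] hj; have jN1 : j != N.-1 by apply: contraNneq hj => ->.
rewrite !Hadj; try lia.
by wl.
Qed.


Lemma anti (T : finType) (adj : rel T) x y : is_tournament adj -> x != y -> adj y x = ~~ adj x y.
Proof. by move=> [_ [_ t]] /t; case: (adj x y); case: (adj y x). Qed.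

Lemma weave_wrel (T : finType) (adj : rel T) n (w : 'I_n -> T) :
  is_tournament adj -> weave_on adj w ->
  exists dO dE, forall i j : 'I_n, adj (w i) (w j) = wrel dO dE i j.
Proof.
move=> tr [winj [Hopp [HO HE]]].
have [_ [irr _]] := tr.
have key : forall dO dE, (forall i j : 'I_n, i < j -> adj (w i) (w j) = wrel dO dE i j) ->
    forall i j : 'I_n, adj (w i) (w j) = wrel dO dE i j.
  move=> dO dE H i j; case: (ltngtP i j) => [lt|gt|eq]; first exact: H.
    have ne : (j : nat) != i by rewrite neq_ltn gt.
    rewrite (anti (x := w j) (y := w i) tr); last by apply: contra ne => /eqP /winj ->.
    by rewrite H // (wrel_anti dO dE ne).
  have -> : i = j by apply: val_inj.
  by rewrite (negbTE (irr _)) /wrel eqxx.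
have gen : forall (dO dE : bool) (i j : 'I_n), i < j ->
   (odd i = false -> odd j = false -> adj (w i) (w j) = dO) ->
   (odd i = true -> odd j = true -> adj (w i) (w j) = dE) ->
   adj (w i) (w j) = wrel dO dE i j.
  move=> dO dE i j lt H0 H1.
  have ne : (i : nat) != j by rewrite neq_ltn lt.
  rewrite /wrel ne /=.
  case oi: (odd i); case oj: (odd j) => /=.
  - rewrite H1 //; case: (dE) => /=; lia.
  - by rewrite lt; apply: Hopp => //=; rewrite oi oj.
  - by rewrite lt; apply: Hopp => //=; rewrite oi oj.
  - rewrite H0 //; case: (dO) => /=; lia.
have bw : forall i j : 'I_n, i < j -> adj (w j) (w i) -> adj (w i) (w j) = false.
  move=> i j lt h; apply/negbTE; rewrite -(anti tr) //.
  have ne : (i : nat) != j by rewrite neq_ltn lt.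
  by apply: contra ne => /eqP /winj ->.
case: HO => HO; case: HE => HE; [exists true, true | exists true, false
  | exists false, true | exists false, false]; apply: key => i j lt; apply: gen => // oi oj;
  first [ by apply: HO => //=; rewrite ?oi ?oj | by apply: HE => //=; rewrite ?oi ?oj
   | by apply: bw => //; apply: HO => //=; rewrite ?oi ?oj
   | by apply: bw => //; apply: HE => //=; rewrite ?oi ?oj ].
Qed.


Ltac splitif := repeat match goal with |- context [if ?c then _ else _] =>
  let E := fresh "E" in case E: c => /= end.
Ltac vl := rewrite /wrel /=; splitif; lia.

Definition vrel dO dE n i j :=
  if (i < n) && (j < n) then wrel dO dE i j
  else if (i == n) && (j < n) then ~~ odd j
  else if (i < n) && (j == n) then odd i else false.

Lemma hinj_gen (T : finType) (adj : rel T) N (h : nat -> T) (R : nat -> nat -> bool) :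
  (forall x, ~~ adj x x) -> (forall i j, i < N -> j < N -> adj (h i) (h j) = R i j) ->
  (forall i j, i < N -> j < N -> i != j -> R i j || R j i) ->
  forall i j, i < N -> j < N -> h i = h j -> i = j.
Proof.
move=> irr HR tot i j iN jN e; apply/eqP; apply/negPn/negP => ij.
by have := tot i j iN jN ij; rewrite -!HR // e orbb (negbTE (irr _)).
Qed.

Lemma part1 : forall (T : finType) (adj : rel T) (n : nat) (w : 'I_n -> T),
      is_tournament adj -> weave_on adj w -> bijective w ->
      3 <= #|T| -> prime_tournament adj ->
      exists m : nat, odd m /\ (tour_iso adj (@Tadj m) \/ tour_iso adj (@Uadj m)).
Proof.
move=> T adj n w tr wv bw T3 pr.
have [dO [dE Hw]] := weave_wrel tr wv.
have cardn : #|T| = n by rewrite -(bij_eq_card bw) card_ord.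
case: bw => wi wK wiK; clear wv.
case: n w wi wK wiK Hw cardn => [|n] w wi wK wiK Hw cardn; first by rewrite cardn in T3.
apply: (@core _ _ n.+1 (fun i => w (inord i)) dO dE tr); first by rewrite -cardn.
  by move=> x; exists (wi x) => //; rewrite inord_val wiK.
  by move=> i j iN jN; rewrite Hw !inordK.
exact: pr.
Qed.

Lemma part2 : forall (T : finType) (adj : rel T) (n : nat) (w : 'I_n -> T) (v : T),
      is_tournament adj -> weave_on adj w ->
      (forall i, w i != v) -> (forall x, x = v \/ exists i, x = w i) ->
      2 <= n ->
      (forall i : 'I_n, odd i.+1 -> adj v (w i)) ->
      (forall i : 'I_n, ~~ odd i.+1 -> adj (w i) v) ->
      prime_tournament adj ->
      exists m : nat, odd m /\
        (tour_iso adj (@Tadj m) \/ tour_iso adj (@Uadj m) \/ tour_iso adj (@Wadj m)).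
Proof.
move=> T adj n w v tr wv wnv cover n2 Hodd Hev pr.
have [dO [dE Hw]] := weave_wrel tr wv.
have [_ [irr _]] := tr.
clear wv.
case: n w wnv cover n2 Hodd Hev Hw => [|n] w wnv cover n2 Hodd Hev Hw; first by [].
pose h i := if i < n.+1 then w (inord i) else v.
have hw : forall i, i < n.+1 -> h i = w (inord i) by move=> i iN; rewrite /h iN.
have hv : h n.+1 = v by rewrite /h ltnn.
have A2 : forall i, i < n.+1 -> adj v (w (inord i)) = ~~ odd i.
  move=> i iN; case oi: (odd i) => /=.
    apply/negbTE; rewrite -(anti tr); last by rewrite eq_sym wnv.
    apply: Hev; by rewrite /= inordK // oi.
  by apply: Hodd; rewrite /= inordK // oi.
have A3 : forall i, i < n.+1 -> adj (w (inord i)) v = odd i.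
  by move=> i iN; rewrite (anti tr) ?A2 ?negbK // eq_sym wnv.
have adjH : forall i j, i < n.+2 -> j < n.+2 -> adj (h i) (h j) = vrel dO dE n.+1 i j.
  move=> i j iN jN; rewrite /vrel.
  have [ii|ii] : i < n.+1 \/ i = n.+1 by lia.
    have [jj|jj] : j < n.+1 \/ j = n.+1 by lia.
      by rewrite !hw // ii jj /= Hw !inordK.
    rewrite jj (hw i ii) hv A3 //; splitif; lia.
  have [jj|jj] : j < n.+1 \/ j = n.+1 by lia.
    rewrite ii (hw j jj) hv A2 //; splitif; lia.
  rewrite ii jj hv (negbTE (irr _)); splitif; lia.
have surj : forall x, exists2 i, i < n.+2 & x = h i.
  move=> x; case: (cover x) => [->|[k ->]]; first by exists n.+1.
  by exists k; [apply: (ltn_trans (ltn_ord k)) | rewrite /h ltn_ord inord_val].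
have hinj : forall i j, i < n.+2 -> j < n.+2 -> h i = h j -> i = j.
  apply: (hinj_gen irr adjH) => i j iN jN ij; rewrite /vrel; splitif; rewrite /wrel /=; splitif; lia.
have hneq : forall i j, i < n.+2 -> j < n.+2 -> i != j -> h i != h j.
  by move=> i j iN jN; apply: contra => /eqP /hinj -> .
have pre : forall s x, x != h s -> exists2 j, j < n.+2 & (x = h j /\ j != s).
  move=> s x; have [j jN ->] := surj x => hs; exists j => //; split=> //.
  by apply: contraNneq hs => ->.
have fromcore : forall m, odd m /\ (tour_iso adj (@Tadj m) \/ tour_iso adj (@Uadj m)) ->
   odd m /\ (tour_iso adj (@Tadj m) \/ tour_iso adj (@Uadj m) \/ tour_iso adj (@Wadj m)).
  by move=> m [om [H|H]]; split; auto.
case: dE Hw adjH => Hw adjH; last first.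
  pose h' i := if i is i'.+1 then h i' else h n.+1.
  have [m Hm] : exists m, odd m /\ (tour_iso adj (@Tadj m) \/ tour_iso adj (@Uadj m)).
    apply: (@core _ _ n.+2 h' false dO tr) => //.
      move=> x; have [i iN ->] := surj x.
      case: (ltngtP i n.+1) => ii; first by exists i.+1.
        by lia.
      by exists 0 => //; rewrite ii.
    move=> [|i] [|j] iN jN /=; rewrite adjH //; try lia; rewrite /vrel; vl.
  by exists m; apply: fromcore.
case: dO Hw adjH => Hw adjH; case oN: (odd n.+1).
- exfalso; apply: (@np_sink _ _ (h n) (h 0) (h n.+1) pr); try (apply: hneq; lia).
  move=> x /pre [j jN [-> j0]]; rewrite adjH; try lia. rewrite /vrel; vl.
- exists n.+2; split; first by lia.
  right; right; apply: (@iso_gen _ _ n.+2 h id) => //.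
  move=> a b; have := ltn_ord a; have := ltn_ord b; rewrite adjH // /vrel /Wadj /=; vl.
- exfalso; apply: (@np_pair _ _ (h n) (h n.+1) (h 0) pr); try (apply: hneq; lia).
  move=> x /pre [j jN [-> j0]] hj; have jN1 : j != n.+1 by apply: contraNneq hj => ->.
  rewrite !adjH; try lia. rewrite /vrel; vl.
- have [m Hm] : exists m, odd m /\ (tour_iso adj (@Tadj m) \/ tour_iso adj (@Uadj m)).
    apply: (@core _ _ n.+2 h false true tr) => //.
    move=> i j iN jN /=; rewrite adjH //; rewrite /vrel; vl.
  by exists m; apply: fromcore.
Qed.


Theorem corollary3p3 :
  (* (i) *)
  (forall (T : finType) (adj : rel T) (n : nat) (w : 'I_n -> T),
      is_tournament adj -> weave_on adj w -> bijective w ->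
      3 <= #|T| -> prime_tournament adj ->
      exists m : nat, odd m /\ (tour_iso adj (@Tadj m) \/ tour_iso adj (@Uadj m))) /\
  (* (ii): (T, adj) is W+v, where W is the weave induced on the image of w *)
  (forall (T : finType) (adj : rel T) (n : nat) (w : 'I_n -> T) (v : T),
      is_tournament adj -> weave_on adj w ->
      (forall i, w i != v) -> (forall x, x = v \/ exists i, x = w i) ->
      2 <= n ->
      (forall i : 'I_n, odd i.+1 -> adj v (w i)) ->
      (forall i : 'I_n, ~~ odd i.+1 -> adj (w i) v) ->
      prime_tournament adj ->
      exists m : nat, odd m /\
        (tour_iso adj (@Tadj m) \/ tour_iso adj (@Uadj m) \/ tour_iso adj (@Wadj m))).
Proof. split; [exact: part1 | exact: part2]. Qed.
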